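(* Let $\mathcal C$ be a concept hierarchy, $r_1,r_2,\epsilon\in[0,1]$, $a>0$ a real with $r_1\le ar_2(1-\epsilon)$, $m$ a positive integer, and let $\mathcal A_1$ and $\mathcal L$ be the networks defined below (with $\mathcal L$ having fixed sets $F$ and $E$ satisfying the stated constraints). Then $\mathcal L$ $implements_1$ $\mathcal A_1$: for every $B\subseteq C_0$, in the executions of $\mathcal A_1$ and $\mathcal L$ on input $B$, for every concept $c$, if $rep(c)$ fires at time $level(c)$ in $\mathcal A_1$, then at least $m(1-\epsilon)$ of the neurons in $reps(c)$ fire at time $level(c)$ in $\mathcal L$.
   Context: Concept hierarchies: fix positive integers $\ell_{max},n,k$. A universal set $D$ of concepts is partitioned into disjoint sets $D_0,\dots,D_{\ell_{max}}$ with $|D_0|=n$; $level(c)=\ell$ for $c\in D_\ell$. A concept hierarchy $\mathcal C$ consists of $C\subseteq D$, with $C_\ell=C\cap D_\ell$, and for each $c\in C_\ell$ with $1\le\ell\le\ell_{max}$ a set $children(c)\subseteq C_{\ell-1}$, such that $|C_{\ell_{max}}|=k$, $|children(c)|=k$ for all such $c$, and $children(c)\cap children(c')=\emptyset$ for distinct $c,c'\in C_\ell$. Common network dynamics: neurons partitioned into layers $N_0,\dots,N_{\ell_{max}}$; threshold $\tau$; weights $w(u,v)\in\{0,1\}$ for $u\in N_{\ell-1}$, $v\in N_\ell$. Failed neurons never fire. A non-failed neuron $v\in N_\ell$, $\ell\ge1$, does not fire at time 0 and fires at time $t\ge1$ iff $\sum_{u\in N_{\ell-1}}w(u,v)x_u(t-1)\ge\tau$,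 where $x_u(s)\in\{0,1\}$ indicates whether $u$ fires at time $s$. $\mathcal A_1$: no failures; each $c\in D_0$ has $rep(c)\in N_0$, each $c\in C$ with $level(c)\ge1$ has $rep(c)\in N_{level(c)}$, all distinct; $w(u,v)=1$ iff $v=rep(c)$, $u=rep(c')$ for a child $c'$ of $c$, else $0$; $\tau=r_2k$. Input $B\subseteq C_0$: the layer-0 neurons $rep(b)$, $b\in B$, fire at time 0, no other layer-0 neuron fires at time 0, and no layer-0 neuron fires at any other time. $\mathcal L$: each $c\in D_0$ has a set $reps(c)$ of $m$ neurons in $N_0$, each $c\in C$ with $level(c)\ge1$ a set $reps(c)$ of $m$ neurons in $N_{level(c)}$, all pairwise disjoint. $E$ is a set of pairs $(u,v)$ with $v\in reps(c)$ and $u\in reps(c')$ for some child $c'$ of $c$; $w(u,v)=1$ iff $(u,v)\in E$, else $0$. Threshold $\tau=ar_2km(1-\epsilon)$. A fixed set $F$ of neurons is failed. Constraints: for every concept $c$, at least $m(1-\epsilon)$ neurons of $reps(c)$ are not in $F$; and for every $c$ with $level(c)\ge1$, every $v\in reps(c)$ and every child $c'$ of $c$, there are at least $am(1-\epsilon)$ neurons $u\in reps(c')\setminus F$ with $(u,v)\in E$. Input $B\subseteq C_0$: a layer-0 neuron fires at time 0 iff it is in $\bigcup_{b\in B}reps(b)\setminus F$, and no layer-0 neuron fires at any other time. *)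

(* Defs.v *)
From mathcomp Require Import all_boot all_order all_algebra.
Set Implicit Arguments. Unset Strict Implicit. Unset Printing Implicit Defensive.
Import Order.TTheory GRing.Theory Num.Theory.
Local Open Scope ring_scope.

(* Generic network dynamics.  [layer v] is the layer index of neuron v,
   [w u v] the (0/1) weight from u to v (only consecutive layers count),
   [tau] the threshold, [failed] the failed neurons, [inp] the layer-0
   neurons that are stimulated at time 0.  [fires t v] = x_v(t). *)
Definition fires (R : numDomainType) (N : finType) (layer : N -> nat)
  (w : rel N) (tau : R) (failed : pred N) (inp : pred N) : nat -> N -> bool :=
  fix f t := match t with
  | 0 => fun v => [&& layer v == 0%N, inp v & ~~ failed v]
  | t'.+1 => fun v =>
      [&& ~~ failed v, layer v != 0%N &
          tau <= \sum_(u : N | (layer u).+1 == layer v)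
                   (((w u v && f t' u) : nat)%:R : R)]
  end.

Definition concept_hierarchy (D : finType) (lmax n k : nat) (level : D -> nat)
  (C : {set D}) (children : D -> {set D}) : Prop :=
  [/\ (forall c, level c <= lmax)%N,
      #|[set c | level c == 0%N]| = n /\
      #|[set c in C | level c == lmax]| = k,
      (forall c, c \in C -> (0 < level c)%N ->
         children c \subset [set c' in C | (level c').+1 == level c]),
      (forall c, c \in C -> (0 < level c)%N -> #|children c| = k) &
      (forall c c', c \in C -> c' \in C -> level c = level c' -> (0 < level c)%N ->
         c != c' -> [disjoint children c & children c'])].

(* The concepts that have representing neurons: all of D_0 and all of C. *)
Definition concept (D : finType) (level : D -> nat) (C : {set D}) (c : D) : bool :=
  (level c == 0%N) || (c \in C).

Definition A1_rep_ok (D : finType) (level : D -> nat) (C : {set D})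
  (N : finType) (layer : N -> nat) (rep : D -> N) : Prop :=
  (forall c c', concept level C c -> concept level C c' -> rep c = rep c' -> c = c') /\
  (forall c, concept level C c -> layer (rep c) = level c).

Definition A1_w (D : finType) (level : D -> nat) (C : {set D})
  (children : D -> {set D}) (N : finType) (rep : D -> N) : rel N :=
  fun u v => [exists c, exists c', [&& c \in C, (0 < level c)%N,
                 c' \in children c, v == rep c & u == rep c']].

Definition A1_input (D : finType) (N : finType) (rep : D -> N) (B : {set D}) : pred N :=
  fun u => [exists b in B, u == rep b].

Definition L_ok (R : numDomainType) (D : finType) (level : D -> nat) (C : {set D})
  (children : D -> {set D}) (N : finType) (layer : N -> nat)
  (reps : D -> {set N}) (E : rel N) (F : {set N}) (eps a : R) (m : nat) : Prop :=
  [/\ (forall c, concept level C c -> #|reps c| = m) /\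
      (forall c, concept level C c -> forall v, v \in reps c -> layer v = level c),
      (forall c c', concept level C c -> concept level C c' -> c != c' ->
         [disjoint reps c & reps c']),
      (forall u v, E u v -> exists c c', [/\ c \in C, (0 < level c)%N,
          c' \in children c, v \in reps c & u \in reps c']),
      (forall c, concept level C c -> m%:R * (1 - eps) <= #|reps c :\: F|%:R) &
      (forall c c', c \in C -> (0 < level c)%N -> c' \in children c ->
         forall v, v \in reps c ->
           a * m%:R * (1 - eps) <= #|[set u in reps c' :\: F | E u v]|%:R)].

Definition L_input (D : finType) (N : finType) (reps : D -> {set N}) (B : {set D}) : pred N :=
  fun u => [exists b in B, u \in reps b].

(* Main.v *)
Require Import Defs.
From mathcomp Require Import all_boot all_order all_algebra ring.
Import Order.TTheory GRing.Theory Num.Theory.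
Local Open Scope ring_scope.

Lemma sum_bool_card (T : finType) (P b : pred T) :
  (\sum_(u | P u) (b u : nat) = #|[set u | P u && b u]|)%N.
Proof.
rewrite -sum1_card big_mkcond /= [RHS]big_mkcond /=.
by apply: eq_bigr => u _; rewrite inE; case: (P u); case: (b u).
Qed.

Lemma disj_sum (I T : finType) (S : {set I}) (X : I -> {set T}) (Q : {set T}) :
  (forall i j, i \in S -> j \in S -> i != j -> [disjoint X i & X j]) ->
  (forall i, i \in S -> X i \subset Q) ->
  (\sum_(i in S) #|X i| <= #|Q|)%N.
Proof.
move=> dis sub.
have E1 : forall i, i \in S -> #|X i| = (\sum_(t in Q) (t \in X i : nat))%N.
  move=> i iS; rewrite -sum1_card big_mkcond /= [RHS]big_mkcond /=.
  apply: eq_bigr => t _; case tX: (t \in X i) => //.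
  by rewrite (subsetP (sub i iS) t tX).
  by case: (t \in Q).
rewrite (eq_bigr _ E1) exchange_big /= -[X in (_ <= X)%N]sum1_card.
apply: leq_sum => t tQ.
case: (pickP (fun i => (i \in S) && (t \in X i))) => [i0 /andP [i0S ti0]|none].
  rewrite (bigD1 i0) //= ti0 big1 //.
  move=> j /andP [jS ji0].
  case tj: (t \in X j) => //.
  by rewrite (disjointFl (dis j i0 jS i0S ji0) ti0) in tj.
rewrite big1 // => j jS; have := none j; rewrite jS /=; by move=> ->.
Qed.

Theorem theorem8p1 (R : realFieldType) (D : finType) (lmax n k : nat)
  (level : D -> nat) (C : {set D}) (children : D -> {set D})
  (r1 r2 eps a : R) (m : nat)
  (N1 : finType) (layer1 : N1 -> nat) (rep : D -> N1)
  (N2 : finType) (layer2 : N2 -> nat) (reps : D -> {set N2})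
  (E : rel N2) (F : {set N2}) :
  (0 < lmax)%N -> (0 < n)%N -> (0 < k)%N ->
  concept_hierarchy lmax n k level C children ->
  0 <= r1 <= 1 -> 0 <= r2 <= 1 -> 0 <= eps <= 1 -> 0 < a ->
  r1 <= a * r2 * (1 - eps) -> (0 < m)%N ->
  (forall u, layer1 u <= lmax)%N -> A1_rep_ok level C layer1 rep ->
  (forall u, layer2 u <= lmax)%N -> L_ok level C children layer2 reps E F eps a m ->
  forall B : {set D}, B \subset [set c in C | level c == 0%N] ->
  forall c : D, concept level C c ->
  fires layer1 (A1_w level C children rep) (r2 * k%:R) pred0 (A1_input rep B)
        (level c) (rep c) ->
  m%:R * (1 - eps) <=
    #|[set v in reps c |
        fires layer2 E (a * r2 * k%:R * m%:R * (1 - eps)) (fun v => v \in F)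
              (L_input reps B) (level c) v]|%:R.
Proof.
move=> _ _ _ [_ _ chsub _ _] _ /andP [r20 _] /andP [_ eps1] a0 _ _ _ [repinj replev]
  _ [[repsc repsl] repsdis _ repsF repsE] B BC.
set f1 := fires _ _ _ _ _.
set f2 := fires _ _ _ _ _.
have conC : forall x, x \in C -> concept level C x by move=> x xC; rewrite /concept xC orbT.
have key : forall l c, concept level C c -> level c = l -> f1 l (rep c) ->
    forall v, v \in reps c -> v \notin F -> f2 l v.
  elim=> [|l IH] c0 cc lc.
    rewrite /f1 /= => /and3P [_ /existsP [b /andP [bB /eqP rb]] _] v vr vF.
    have := subsetP BC b bB; rewrite inE => /andP [bC /eqP lb].
    have cb : c0 = b by apply: repinj => //; rewrite /concept lb.
    rewrite /f2 /= (repsl c0 cc v vr) lc eqxx vF andbT /=.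
    by apply/existsP; exists c0; rewrite vr andbT cb.
  rewrite /f1 /= => /andP [_ hs] v vr vF.
  have c0C : c0 \in C by move: cc; rewrite /concept lc /=.
  have lc0 : (0 < level c0)%N by rewrite lc.
  set S := [set c' in children c0 | f1 l (rep c')].
  have Ssub : forall c', c' \in S -> c' \in C /\ level c' = l.
    move=> c'; rewrite inE => /andP [cc' _].
    have := subsetP (chsub c0 c0C lc0) c' cc'.
    by rewrite inE lc eqSS => /andP [-> /eqP].
  have hS : r2 * k%:R <= #|S|%:R.
    apply: (le_trans hs); rewrite -natr_sum sum_bool_card ler_nat.
    apply: leq_trans (leq_imset_card rep S); apply: subset_leq_card.
    apply/subsetP => u; rewrite inE => /andP [_ /andP [/existsP [c1 /existsP [c' h]] fu]].
    move: h => /and5P [c1C c1l c'c /eqP rc /eqP ue].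
    have e : c0 = c1 by apply: repinj => //; exact: conC.
    apply/imsetP; exists c'; last exact: ue.
    by rewrite inE e c'c /= -ue.
  rewrite /f2 /= vF (repsl c0 cc v vr) lc /=.
  set X := fun c' => [set u in reps c' :\: F | E u v].
  have h1 : (\sum_(c' in S) #|X c'|)%:R <=
     \sum_(u | (layer2 u).+1 == l.+1) ((E u v && fires layer2 E (a * r2 * k%:R * m%:R * (1 - eps))
              (fun v => v \in F) (L_input reps B) l u : nat)%:R : R).
    rewrite -natr_sum sum_bool_card ler_nat; apply: disj_sum.
      move=> i j iS jS ij; have [iC _] := Ssub i iS; have [jC _] := Ssub j jS.
      have := repsdis i j (conC i iC) (conC j jC) ij.
      apply: disjointW;
        by apply/subsetP => u; rewrite !inE => /andP [/andP [_ ->] _].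
    move=> i iS; have [iC li] := Ssub i iS; apply/subsetP => u.
    rewrite !inE => /andP [/andP [uF ur] Euv].
    rewrite (repsl i (conC i iC) u ur) li eqxx Euv /=.
    apply: (IH i (conC i iC) li) => //.
    by move: iS; rewrite inE => /andP [_].
  apply: le_trans h1; rewrite natr_sum.
  have h2 : \sum_(c' in S) (a * m%:R * (1 - eps)) <= \sum_(c' in S) (#|X c'|%:R : R).
    apply: ler_sum => i iS; have [iC _] := Ssub i iS.
    move: iS; rewrite inE => /andP [ic _].
    exact: repsE c0 i c0C lc0 ic v vr.
  apply: le_trans h2; rewrite sumr_const -[_ *+ #|S|]mulr_natl.
  have -> : a * r2 * k%:R * m%:R * (1 - eps) = (r2 * k%:R) * (a * m%:R * (1 - eps)) by ring.
  apply: ler_wpM2r => //.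
  by rewrite mulr_ge0 ?mulr_ge0 ?subr_ge0 // ltW.
move=> c cc f1c.
apply: le_trans (repsF c cc) _; rewrite ler_nat; apply: subset_leq_card.
apply/subsetP => v; rewrite !inE => /andP [vF vr]; rewrite vr /=.
exact: key c cc erefl f1c v vr vF.
Qed.
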